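(* In the setting of the context, suppose that $m$, the order of $\sigma$, is prime. Then for every nonzero integer $k$, $\tilde{\mathfrak g}_{k\delta}=\pi_k(\mathfrak h)\otimes t^k$. Furthermore, if $\mathfrak g$ is a finite-dimensional simple Lie algebra, then $\tilde{\mathfrak g}_{k\delta}\subseteq\tilde{\mathfrak g}_c$.
   Context: All Lie algebras are over $\mathbb C$. An extended affine Lie algebra (EALA) is a triple $(\mathfrak g,(\cdot,\cdot),\mathfrak h)$ where $\mathfrak g$ is a Lie algebra, $\mathfrak h$ a subalgebra and $(\cdot,\cdot)$ a bilinear form such that: the form is symmetric, non-degenerate, invariant; $\mathfrak h$ is finite-dimensional and $\mathfrak g=\bigoplus_{\alpha\in\mathfrak h^*}\mathfrak g_\alpha$, $\mathfrak g_\alpha=\{x:[h,x]=\alpha(h)x\ \forall h\in\mathfrak h\}$, $\mathfrak g_0=\mathfrak h$; with root system $R=\{\alpha:\mathfrak g_\alpha\ne0\}$, $t_\alpha\in\mathfrak h$ given by $\alpha(h)=(h,t_\alpha)$, $(\alpha,\beta)=(t_\alpha,t_\beta)$, $R^\times=\{\alpha\in R:(\alpha,\alpha)\ne0\}$, $R^0=R\setminus R^\times$: $\mathrm{ad}\,x$ locally nilpotent for $x\in\mathfrak g_\alpha$, $\alpha\in R^\times$; $R$ discrete; $R^\times$ connected and isotropic roots non-isolated. Root systems are assumed reduced. A finite-dimensional simple Lie algebra with a Cartan subalgebra and (a multiple of) its Killing form is an EALA of this kind. The core of an EALA is the subalgebra generated by its non-isotropic root spaces. Setting: $(\mathfrak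 g,(\cdot,\cdot),\mathfrak h)$ is an EALA with root system $R$; $\sigma$ is an automorphism of $\mathfrak g$ with $\sigma^m=\mathrm{id}$, $\sigma(\mathfrak h)=\mathfrak h$, $(\sigma x,\sigma y)=(x,y)$, and $C_{\mathfrak g^\sigma}(\mathfrak h^\sigma)=\mathfrak h^\sigma$ ($\mathfrak g^\sigma,\mathfrak h^\sigma$ fixed points, $C$ centralizer). $\sigma$ acts on $\mathfrak h^*$ by $\sigma(\alpha)(h)=\alpha(\sigma^{-1}h)$. Let $\omega$ be a primitive $m$-th root of unity, $\mathfrak g^{\bar i}=\{x:\sigma(x)=\omega^ix\}$, $\pi_j=\frac1m\sum_{i=0}^{m-1}\omega^{-ij}\sigma^i$ (indices mod $m$), $\pi=\pi_0$. Assume some $\alpha\in R^\times$ has $(\pi(\alpha),\pi(\alpha))\ne0$. The affinization $\tilde{\mathfrak g}=\bigoplus_{i\in\mathbb Z}(\mathfrak g^{\bar i}\otimes t^i)\oplus\mathbb Cc\oplus\mathbb Cd$ has bracket $[x\otimes t^n+rc+sd,\,y\otimes t^{n'}+r'c+s'd]=[x,y]\otimes t^{n+n'}+n\delta_{n+n',0}(x,y)c+sn'\,y\otimes t^{n'}-s'n\,x\otimes t^n$ and form $(x\otimes t^n+rc+sd,\,y\otimes t^{n'}+r'c+s'd)=\delta_{n+n',0}(x,y)+rs'+r's$; with $\tilde{\mathfrak h}=\mathfrak h^\sigma\oplus\mathbb Cc\oplus\mathbb Cd$, it is an EALA (a known fact) with root spaces $\tilde{\mathfrak g}_{\tilde\alpha}$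 ($\tilde\alpha\in\tilde{\mathfrak h}^*$) and core $\tilde{\mathfrak g}_c$. $\delta\in\tilde{\mathfrak h}^*$ vanishes on $\mathfrak h^\sigma\oplus\mathbb Cc$ with $\delta(d)=1$. *)

(* Defs.v *)
From HB Require Import structures.
From mathcomp Require Import all_boot all_order all_algebra.
From mathcomp Require Export complex reals.
Set Implicit Arguments. Unset Strict Implicit. Unset Printing Implicit Defensive.
Import Order.TTheory GRing.Theory Num.Theory.
Local Open Scope ring_scope.

Section LieDefs.
Variables (C : numClosedFieldType) (V : lmodType C).
Variable br : V -> V -> V.
Variable B : V -> V -> C.
Variable h : V -> Prop.

Definition is_lie : Prop :=
  [/\ (forall a x y z, br (a *: x + y) z = a *: br x z + br y z),
      (forall a x y z, br x (a *: y + z) = a *: br x y + br x z),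
      (forall x, br x x = 0) &
      (forall x y z, br x (br y z) + br y (br z x) + br z (br x y) = 0)].

Definition subspace (P : V -> Prop) : Prop :=
  P 0 /\ (forall a x y, P x -> P y -> P (a *: x + y)).
Definition subalgebra (P : V -> Prop) : Prop :=
  subspace P /\ (forall x y, P x -> P y -> P (br x y)).
Definition lie_ideal (P : V -> Prop) : Prop :=
  subspace P /\ (forall x y, P y -> P (br x y)).

Definition finite_dim (P : V -> Prop) : Prop :=
  exists s : seq V, forall x,
    P x <-> exists c : 'I_(size s) -> C, x = \sum_(i < size s) c i *: s`_i.

Definition simple_lie : Prop :=
  (exists x y, br x y != 0) /\
  (forall I, lie_ideal I -> (forall x, I x -> x = 0) \/ (forall x, I x)).

Definition good_form : Prop :=
  [/\ (forall a x y z, B (a *: x + y) z = a * B x z + B y z),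
      (forall x y, B x y = B y x),
      (forall x, (forall y, B x y = 0) -> x = 0) &
      (forall x y z, B (br x y) z = B x (br y z))].

(** elements of h^* are represented by functions V -> C that are linear on h;
    two such represent the same functional iff they agree on h. *)
Definition hdual (al : V -> C) : Prop :=
  forall a y z, h y -> h z -> al (a *: y + z) = a * al y + al z.
Definition eqh (al be : V -> C) : Prop := forall y, h y -> al y = be y.

Definition rootsp (al : V -> C) (x : V) : Prop :=
  forall y, h y -> br y x = al y *: x.

Definition is_root (al : V -> C) : Prop :=
  hdual al /\ exists x, x != 0 /\ rootsp al x.

Definition tvec (al : V -> C) (t : V) : Prop :=
  h t /\ forall y, h y -> al y = B y t.

Definition nonisotropic (al : V -> C) : Prop :=
  exists t, tvec al t /\ B t t != 0.
Definition orth (al be : V -> C) : Prop :=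
  exists ta tb, [/\ tvec al ta, tvec be tb & B ta tb = 0].

Definition Rx (al : V -> C) : Prop := is_root al /\ nonisotropic al.
Definition R0 (al : V -> C) : Prop := is_root al /\ ~ nonisotropic al.

Definition eala : Prop :=
  [/\ is_lie, good_form, subalgebra h & finite_dim h] /\
  [/\
      (forall x, exists n (al : 'I_n -> V -> C) (xs : 'I_n -> V),
          (forall i, hdual (al i) /\ rootsp (al i) (xs i)) /\
          x = \sum_(i < n) xs i),
      (forall x, rootsp (fun _ => 0) x <-> h x),
      (forall al x, Rx al -> rootsp al x ->
          forall y, exists n, iter n (br x) y = 0) &
      [/\
      (forall al, is_root al -> exists (ys : seq V) (e : C),
          [/\ 0 < e, (forall y, y \in ys -> h y) &
              forall be, is_root be ->
                (forall y, y \in ys -> `|be y - al y| < e) -> eqh be al]),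
      ~ (exists R1 R2 : (V -> C) -> Prop,
          [/\ (forall al, Rx al -> R1 al \/ R2 al),
              (forall al, R1 al -> Rx al), (forall al, R2 al -> Rx al),
              (exists al, R1 al) /\ (exists al, R2 al) &
              (forall al be, R1 al -> R2 be -> orth al be)]),
      (forall de, R0 de -> exists al, Rx al /\ Rx (fun y => al y + de y)) &
      (forall al, Rx al -> ~ is_root (fun y => 2 * al y))]].

Definition lie_aut (s : V -> V) : Prop :=
  [/\ (forall a x y, s (a *: x + y) = a *: s x + s y), bijective s &
      (forall x y, s (br x y) = br (s x) (s y))].

Variables (sigma : V -> V) (m : nat) (w : C).

(** sigma acting on h^*:  (sigma^i alpha)(y) = alpha(sigma^{-i} y)
    = alpha(sigma^(m-i) y); pi(alpha) = 1/m sum_i sigma^i(alpha). *)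
Definition pi_dual (al : V -> C) : V -> C :=
  fun y => m%:R^-1 * \sum_(i < m) al (iter (m - i) sigma y).

Definition pik (k : int) (x : V) : V :=
  m%:R^-1 *: \sum_(i < m) (w ^ (- ((i : nat)%:Z * k))) *: iter i sigma x.

(** An element  sum_n x_n (x) t^n + r c + s d  is recorded as
    (n |-> x_n, r, s); it belongs to g~ iff it has finite support and
    x_n is in g^(n mod m), i.e. sigma x_n = w^n x_n. *)
Record aff := Aff { aloop : int -> V ; acen : C ; ader : C }.

Definition bounded (N : nat) (X : aff) : Prop :=
  forall n : int, (N < `|n|)%N -> aloop X n = 0.

Definition in_aff (X : aff) : Prop :=
  (exists N, bounded N X) /\
  (forall n : int, sigma (aloop X n) = w ^ n *: aloop X n).

Definition aff_add (X Y : aff) : aff :=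
  Aff (fun n => aloop X n + aloop Y n) (acen X + acen Y) (ader X + ader Y).
Definition aff_scale (a : C) (X : aff) : aff :=
  Aff (fun n => a *: aloop X n) (a * acen X) (a * ader X).
Definition aff_zero : aff := Aff (fun _ => 0) 0 0.

(** the bracket of g~, computed with a bound N on the support of X
    (it is the true bracket whenever bounded N X):
    [x t^a + r c + s d, y t^b + r' c + s' d]
      = [x,y] t^(a+b) + a delta_(a+b,0) (x,y) c + s b y t^b - s' a x t^a *)
Definition aff_br (N : nat) (X Y : aff) : aff :=
  Aff (fun n =>
         \sum_(i < N.*2.+1)
            br (aloop X ((i : nat)%:Z - N%:Z)) (aloop Y (n - ((i : nat)%:Z - N%:Z)))
         + (ader X * n%:~R) *: aloop Y n - (ader Y * n%:~R) *: aloop X n)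
      (\sum_(i < N.*2.+1)
          ((i : nat)%:Z - N%:Z)%:~R *
          B (aloop X ((i : nat)%:Z - N%:Z)) (aloop Y (- ((i : nat)%:Z - N%:Z))))
      0.

Definition aff_form (N : nat) (X Y : aff) : C :=
  \sum_(i < N.*2.+1)
     B (aloop X ((i : nat)%:Z - N%:Z)) (aloop Y (- ((i : nat)%:Z - N%:Z)))
  + acen X * ader Y + acen Y * ader X.

(** h~ = h^sigma (+) C c (+) C d *)
Definition in_htilde (H : aff) : Prop :=
  [/\ (forall n : int, n != 0 -> aloop H n = 0),
      h (aloop H 0) & sigma (aloop H 0) = aloop H 0].

(** delta(H) = d-coefficient of H; root space g~_(k delta) *)
Definition kdelta_space (k : int) (X : aff) : Prop :=
  in_aff X /\
  forall H, in_htilde H -> aff_br 0 H X = aff_scale (k%:~R * ader H) X.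

Definition pik_h_tk (k : int) (X : aff) : Prop :=
  exists y, h y /\ X = Aff (fun n => if n == k then pik k y else 0) 0 0.

(** the core g~_c: subalgebra of g~ generated by the root spaces
    g~_alpha~, alpha~ in h~^* with (alpha~, alpha~) <> 0; alpha~ is
    represented by t_alpha~ in h~ (alpha~(H) = (H, t_alpha~)). *)
Inductive aff_core : aff -> Prop :=
| core_root (t X : aff) :
    in_htilde t -> aff_form 0 t t != 0 -> in_aff X ->
    (forall H, in_htilde H -> aff_br 0 H X = aff_scale (aff_form 0 H t) X) ->
    aff_core X
| core_zero : aff_core aff_zero
| core_add X Y : aff_core X -> aff_core Y -> aff_core (aff_add X Y)
| core_scale a X : aff_core X -> aff_core (aff_scale a X)
| core_br N X Y : aff_core X -> aff_core Y -> bounded N X ->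
    aff_core (aff_br N X Y).

End LieDefs.

(* Main.v *)
Require Import Defs.
From mathcomp Require Import all_boot all_order all_algebra complex reals.
From mathcomp Require Import boolp.
From Stdlib Require List.
From mathcomp Require Import zify ring.
Set Implicit Arguments. Unset Strict Implicit. Unset Printing Implicit Defensive.
Import Order.TTheory GRing.Theory Num.Theory.
Local Open Scope ring_scope.

Section Basic.
Variables (C : numClosedFieldType) (V : lmodType C).

Definition lin (f : V -> V) := forall a x y, f (a *: x + y) = a *: f x + f y.

Lemma lin0 f : lin f -> f 0 = 0.
Proof.
move=> Hf; have := Hf 1 0 0; rewrite scaler0 addr0 scale1r.
by move=> E; apply: (@addrI _ (f 0)); rewrite addr0 -E.
Qed.

Lemma linD f : lin f -> forall x y, f (x + y) = f x + f y.
Proof. by move=> Hf x y; have := Hf 1 x y; rewrite !scale1r. Qed.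

Lemma linZ f : lin f -> forall a x, f (a *: x) = a *: f x.
Proof. by move=> Hf a x; have := Hf a x 0; rewrite !addr0 lin0 // addr0. Qed.

Lemma linN f : lin f -> forall x, f (- x) = - f x.
Proof. by move=> Hf x; rewrite -scaleN1r linZ // scaleN1r. Qed.

Lemma linB f : lin f -> forall x y, f (x - y) = f x - f y.
Proof. by move=> Hf x y; rewrite linD // linN. Qed.

Lemma lin_sum f : lin f -> forall (I : Type) (r : seq I) (P : pred I) (F : I -> V),
  f (\sum_(i <- r | P i) F i) = \sum_(i <- r | P i) f (F i).
Proof. by move=> Hf I r P F; apply: (big_morph f (linD Hf) (lin0 Hf)). Qed.

Lemma lin_comp f g : lin f -> lin g -> lin (fun x => f (g x)).
Proof. by move=> Hf Hg a x y; rewrite Hg Hf. Qed.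

Lemma lin_iter f n : lin f -> lin (iter n f).
Proof.
move=> Hf; elim: n => [|n IH] a x y //=.
by rewrite IH Hf.
Qed.

Lemma lin_id : lin id. Proof. by []. Qed.

Lemma lin_sub f g : lin f -> lin g -> lin (fun x => f x - g x).
Proof. by move=> Hf Hg a x y; rewrite Hf Hg scalerBr opprD addrACA. Qed.

Lemma lin_scal c : lin (fun x => c *: x).
Proof. by move=> a x y; rewrite scalerDr !scalerA mulrC. Qed.

Lemma lin_add f g : lin f -> lin g -> lin (fun x => f x + g x).
Proof. by move=> Hf Hg a x y; rewrite Hf Hg scalerDr addrACA. Qed.

Variable br : V -> V -> V.
Hypothesis Hlie : is_lie br.

Lemma br_linr x : lin (br x).
Proof. by case: Hlie => _ Hr _ _ a y z; rewrite Hr. Qed.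

Lemma br_linl z : lin (fun x => br x z).
Proof. by case: Hlie => Hl _ _ _ a y x; rewrite Hl. Qed.

Lemma br0r x : br x 0 = 0. Proof. by have := lin0 (br_linr x); apply. Qed.
Lemma br0l x : br 0 x = 0. Proof. exact: (lin0 (br_linl x)). Qed.
Lemma brDr x y z : br x (y + z) = br x y + br x z. Proof. by have := linD (br_linr x); apply. Qed.
Lemma brDl x y z : br (x + y) z = br x z + br y z. Proof. by have := linD (br_linl z); apply. Qed.
Lemma brZr a x y : br x (a *: y) = a *: br x y. Proof. by have := linZ (br_linr x); apply. Qed.
Lemma brZl a x y : br (a *: x) y = a *: br x y. Proof. by have := linZ (br_linl y); apply. Qed.
Lemma brNr x y : br x (- y) = - br x y. Proof. by have := linN (br_linr x); apply. Qed.
Lemma brNl x y : br (- x) y = - br x y. Proof. by have := linN (br_linl y); apply. Qed.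
Lemma brBr x y z : br x (y - z) = br x y - br x z. Proof. by have := linB (br_linr x); apply. Qed.
Lemma brBl x y z : br (x - y) z = br x z - br y z. Proof. by have := linB (br_linl z); apply. Qed.

Lemma br_anti x y : br x y = - br y x.
Proof.
case: Hlie => _ _ Hxx _.
have := Hxx (x + y); rewrite brDl !brDr !Hxx add0r addr0.
by move/eqP; rewrite addr_eq0 => /eqP.
Qed.

Lemma br_jac x y z : br x (br y z) = br (br x y) z + br y (br x z).
Proof.
case: Hlie => _ _ _ Hj.
rewrite (br_anti (br x y) z) (br_anti x z) brNr; apply/eqP.
by rewrite -subr_eq0 opprD !opprK addrA addrAC Hj.
Qed.

End Basic.

Section Roots.
Variables (C : numClosedFieldType) (V : lmodType C).
Variables (br : V -> V -> V) (h : V -> Prop).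
Hypothesis Hlie : is_lie br.
Hypothesis Hsub : subspace h.
Hypothesis Hh0 : forall x, rootsp br h (fun _ => 0) x <-> h x.

Lemma h0 : h 0. Proof. by case: Hsub. Qed.
Lemma hZD a x y : h x -> h y -> h (a *: x + y). Proof. by case: Hsub => _; apply. Qed.
Lemma hD x y : h x -> h y -> h (x + y).
Proof. by move=> hx hy; rewrite -[x]scale1r; apply: hZD. Qed.
Lemma hZ a x : h x -> h (a *: x).
Proof. by move=> hx; rewrite -[_ *: _]addr0; apply: hZD => //; apply: h0. Qed.
Lemma hN x : h x -> h (- x).
Proof. by move=> hx; rewrite -scaleN1r; apply: hZ. Qed.
Lemma hB x y : h x -> h y -> h (x - y).
Proof. by move=> hx hy; apply: hD => //; apply: hN. Qed.
Lemma hsum (I : Type) (r : seq I) (P : pred I) (F : I -> V) :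
  (forall i, P i -> h (F i)) -> h (\sum_(i <- r | P i) F i).
Proof.
move=> HF; elim/big_rec: _ => [|i x Pi hx]; first exact: h0.
by apply: hD => //; apply: HF.
Qed.

Lemma rootsp0 al : rootsp br h al 0.
Proof. by move=> y _; rewrite br0r // scaler0. Qed.
Lemma rootspZD al a x y : rootsp br h al x -> rootsp br h al y ->
  rootsp br h al (a *: x + y).
Proof.
move=> Hx Hy z hz; rewrite brDr // brZr // Hx // Hy //.
by rewrite scalerDr !scalerA mulrC.
Qed.
Lemma rootspD al x y : rootsp br h al x -> rootsp br h al y -> rootsp br h al (x + y).
Proof. by move=> Hx Hy; rewrite -[x]scale1r; apply: rootspZD. Qed.
Lemma rootspZ al a x : rootsp br h al x -> rootsp br h al (a *: x).
Proof. by move=> Hx; rewrite -[_ *: _]addr0; apply: rootspZD => //; apply: rootsp0. Qed.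
Lemma rootspN al x : rootsp br h al x -> rootsp br h al (- x).
Proof. by move=> Hx; rewrite -scaleN1r; apply: rootspZ. Qed.
Lemma rootsp_sum al (I : Type) (r : seq I) (P : pred I) (F : I -> V) :
  (forall i, P i -> rootsp br h al (F i)) -> rootsp br h al (\sum_(i <- r | P i) F i).
Proof.
move=> HF; elim/big_rec: _ => [|i x Pi hx]; first exact: rootsp0.
by apply: rootspD => //; apply: HF.
Qed.
Lemma rootsp_eqh al be x : eqh h al be -> rootsp br h al x -> rootsp br h be x.
Proof. by move=> E Hx y hy; rewrite Hx // E. Qed.
Lemma rootsp_h al x : eqh h al (fun _ => 0) -> rootsp br h al x -> h x.
Proof. by move=> E Hx; apply/Hh0; apply: rootsp_eqh Hx. Qed.
Lemma h_comm x y : h x -> h y -> br x y = 0.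
Proof. by move=> hx hy; have := (proj2 (Hh0 y) hy) x hx; rewrite scale0r. Qed.

Lemma hdual0 al : hdual h al -> al 0 = 0.
Proof.
move=> Ha; have := Ha 1 0 0 h0 h0; rewrite scaler0 addr0 mul1r.
by move=> E; apply: (@addrI _ (al 0)); rewrite addr0 -E.
Qed.
Lemma hdualD al x y : hdual h al -> h x -> h y -> al (x + y) = al x + al y.
Proof. by move=> Ha hx hy; have := Ha 1 x y hx hy; rewrite scale1r mul1r. Qed.
Lemma hdualZ al a x : hdual h al -> h x -> al (a *: x) = a * al x.
Proof.
by move=> Ha hx; have := Ha a x 0 hx h0; rewrite addr0 hdual0 // addr0.
Qed.
Lemma hdualN al x : hdual h al -> h x -> al (- x) = - al x.
Proof. by move=> Ha hx; rewrite -scaleN1r hdualZ // mulN1r. Qed.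
Lemma hdual_sum al (I : Type) (r : seq I) (P : pred I) (F : I -> V) :
  hdual h al -> (forall i, P i -> h (F i)) ->
  al (\sum_(i <- r | P i) F i) = \sum_(i <- r | P i) al (F i).
Proof.
move=> Ha HF.
suff : h (\sum_(i <- r | P i) F i) /\ al (\sum_(i <- r | P i) F i) = \sum_(i <- r | P i) al (F i) by case.
elim/big_rec2: _ => [|i c x Pi [hx <-]]; first by split; [apply: h0 | apply: hdual0].
by split; [apply: hD => //; apply: HF | rewrite hdualD //; apply: HF].
Qed.

Lemma neq_eqh al be : ~ eqh h al be -> exists y, h y /\ al y != be y.
Proof.
move=> Hn; case: (pselect (exists y, h y /\ al y != be y)) => [H|Hn2]; first exact: H.
exfalso; apply: Hn => y hy; case: (eqVneq (al y) (be y)) => // Hneq.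
by exfalso; apply: Hn2; exists y.
Qed.

Lemma indep (s : seq ((V -> C) * V)) (gam : V -> C) (u : V) :
  rootsp br h gam u ->
  (forall p, List.In p s -> rootsp br h p.1 p.2 /\ ~ eqh h p.1 gam) ->
  u + \sum_(p <- s) p.2 = 0 -> u = 0.
Proof.
have [n Hn] := ubnP (size s).
elim: n s u Hn => [//|n IH] [|[be v] s] u Hn Hu Hs.
  by rewrite big_nil addr0.
rewrite big_cons /=.
have [Hv Hne] := Hs (be, v) (or_introl erefl).
case: (neq_eqh Hne) => y [hy Hy].
move=> E.
pose F z := br y z - be y *: z.
have FL : lin F by apply: lin_sub; [apply: br_linr | apply: lin_scal].
have Frs al x : rootsp br h al x -> F x = (al y - be y) *: x.
  by move=> Hx; rewrite /F Hx // scalerBl.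
have := congr1 F E; rewrite (linD FL) (linD FL) (lin_sum FL) (lin0 FL).
rewrite (Frs _ _ Hu) (Frs _ _ Hv) subrr scale0r add0r => E2.
have : (gam y - be y) *: u = 0.
  apply: (IH [seq (q.1, F q.2) | q <- s] _ _ (rootspZ _ Hu)); first by rewrite size_map; move: Hn => /=; rewrite ltnS.
    move=> p /List.in_map_iff [q [<- Hq]] /=.
    have [Hq1 Hq2] := Hs q (or_intror Hq).
    by split => //; rewrite (Frs _ _ Hq1); apply: rootspZ.
  by rewrite big_map.
move/eqP; rewrite scaler_eq0 subr_eq0 eq_sym (negbTE Hy) /=.
by move/eqP.
Qed.

End Roots.

Lemma In_filter (T : Type) (a : pred T) (s : seq T) p :
  List.In p (filter a s) -> List.In p s /\ a p.
Proof.
elim: s => [//|x s IH] /=; case: ifP => Hx /=.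
  by case=> [<-|/IH [H1 H2]]; [split; [left|] | split; [right|]].
by move/IH => [H1 H2]; split => //; right.
Qed.

Lemma In_iota p a n : List.In p (iota a n) -> (a <= p < a + n)%N.
Proof.
elim: n a => [//|n IH] a /= [<-|/IH]; first by rewrite leqnn addnS ltnS leq_addr.
by rewrite addnS addSn => /andP [H1 H2]; rewrite ltnW.
Qed.

Section SumIn.
Variables (C : numClosedFieldType) (V : lmodType C).
Lemma sum_In (T : Type) (K : V -> Prop) (s : seq T) (P : pred T) (F : T -> V) :
  K 0 -> (forall x y, K x -> K y -> K (x + y)) ->
  (forall p, List.In p s -> P p -> K (F p)) -> K (\sum_(p <- s | P p) F p).
Proof.
move=> K0 KD; elim: s => [|a s IH] HF; first by rewrite big_nil.
rewrite big_cons; case: ifP => Pa.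
  by apply: KD; [apply: HF => //; left | apply: IH => p Hp; apply: HF; right].
by apply: IH => p Hp; apply: HF; right.
Qed.
End SumIn.

Lemma sum_shift (C : numClosedFieldType) (V : lmodType C) n (F : nat -> V) : (0 < n)%N ->
  \sum_(i < n) F i = F 0%N + \sum_(i <- iota 0 n.-1) F i.+1.
Proof.
case: n => [//|n] _; rewrite big_ord_recl /=; congr (_ + _).
by rewrite -(big_mkord xpredT (fun i => F i.+1)) /index_iota subn0.
Qed.

Section Sig.
Variables (C : numClosedFieldType) (V : lmodType C).
Variables (br : V -> V -> V) (h : V -> Prop).
Hypothesis Hlie : is_lie br.
Hypothesis Hsub : subspace h.
Hypothesis Hh0 : forall x, rootsp br h (fun _ => 0) x <-> h x.
Hypothesis Hdec : forall x, exists n (al : 'I_n -> V -> C) (xs : 'I_n -> V),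
          (forall i, hdual h (al i) /\ rootsp br h (al i) (xs i)) /\
          x = \sum_(i < n) xs i.
Variables (sigma : V -> V) (m : nat).
Hypothesis Hsl : lin sigma.
Hypothesis Hsb : forall x y, sigma (br x y) = br (sigma x) (sigma y).
Hypothesis Hm : forall x, iter m sigma x = x.
Hypothesis Hhs : forall x, h x <-> h (sigma x).
Hypothesis Hcent : forall x, sigma x = x ->
     ((forall y, h y -> sigma y = y -> br y x = 0) <-> h x).
Hypothesis Hp : prime m.

Local Notation sig j := (iter j sigma).

Lemma m_gt0 : (0 < m)%N. Proof. exact: prime_gt0. Qed.
Lemma sig_lin j : lin (sig j). Proof. exact: lin_iter. Qed.
Lemma sig_br j x y : sig j (br x y) = br (sig j x) (sig j y).
Proof. by elim: j => [//|j IH] /=; rewrite IH Hsb. Qed.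
Lemma hsig x : h x -> h (sigma x). Proof. exact: (proj1 (Hhs _)). Qed.
Lemma sig_h j x : h x -> h (sig j x).
Proof. by elim: j => [//|j IH] /= hx; apply: (proj1 (Hhs _)); apply: IH. Qed.
Lemma sig_fix j x : sigma x = x -> sig j x = x.
Proof. by move=> Hx; elim: j => [//|j IH] /=; rewrite IH. Qed.
Lemma sigD i j x : sig (i + j) x = sig i (sig j x).
Proof. exact: iterD. Qed.
Lemma sig_mul q x : sig (m * q) x = x.
Proof. by elim: q => [|q IH]; rewrite ?muln0 // mulnS sigD Hm IH. Qed.
Lemma sig_mi i x : (i <= m)%N -> sig i (sig (m - i) x) = x.
Proof. by move=> Hi; rewrite -sigD subnKC // Hm. Qed.

Definition Pavg x := \sum_(i < m) sig i x.
Lemma Pavg_fix x : sigma (Pavg x) = Pavg x.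
Proof.
rewrite /Pavg (lin_sum Hsl).
have := m_gt0; case: m Hm => [//|m' Hm'] _.
rewrite [LHS]big_ord_recr [RHS]big_ord_recl /=.
rewrite -[sigma (iter m' sigma x)]/(iter m'.+1 sigma x) Hm' addrC; congr (_ + _).
Qed.
Lemma Pavg_h x : h x -> h (Pavg x).
Proof. by move=> hx; apply: (hsum Hsub) => i _; apply: sig_h. Qed.
Lemma Pavg_lin : lin Pavg.
Proof.
move=> a x y; rewrite /Pavg scaler_sumr -big_split /=; apply: eq_bigr => i _.
by rewrite (sig_lin i).
Qed.

Lemma mR_neq0 : (m%:R : C) != 0.
Proof. by rewrite pnatr_eq0 -lt0n m_gt0. Qed.

Lemma orbit_one (be : V -> C) e : (0 < e < m)%N ->
  eqh h (fun z => be (sig e z)) be -> forall z, h z -> be (sigma z) = be z.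
Proof.
move=> /andP [e0 em] He.
have Pk k z : h z -> be (sig (k * e) z) = be z.
  elim: k z => [//|k IH] z hz.
  by rewrite mulSn sigD He ?IH //; apply: sig_h.
have [a _ Ha] := Bezoutl e m_gt0.
have : coprime m e by rewrite prime_coprime // gtnNdvd.
rewrite /coprime => /eqP Hg; rewrite Hg in Ha.
case/dvdnP: Ha => q Hq.
move=> z hz; rewrite -(Pk a (sigma z)); last by apply: hsig.
by rewrite -[sigma z]/(sig 1 z) -sigD addnC Hq mulnC sig_mul.
Qed.

Lemma orbit_lem (be : V -> C) e : hdual h be ->
  (forall y, h y -> sigma y = y -> be y = 0) -> (0 < e < m)%N ->
  eqh h (fun z => be (sig e z)) be -> eqh h be (fun _ => 0).
Proof.
move=> Hbe Hfix He1 He.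
have P1 := orbit_one He1 He.
have Pi i z : h z -> be (sig i z) = be z.
  elim: i z => [//|i IH] z hz /=.
  by rewrite P1 ?IH //; apply: sig_h.
move=> z hz.
have E : \sum_(i < m) be (sig i z) = m%:R * be z.
  rewrite (eq_bigr (fun _ => be z)) => [|i _]; last exact: Pi.
  by rewrite sumr_const card_ord mulr_natl.
have E2 : \sum_(i < m) be (sig i z) = be (Pavg z).
  by rewrite /Pavg (hdual_sum Hsub) // => i _; apply: sig_h.
have : m%:R * be z = 0.
  by rewrite -E E2 Hfix //; [apply: Pavg_h | apply: Pavg_fix].
by move/eqP; rewrite mulf_eq0 (negbTE mR_neq0) /= => /eqP.
Qed.


Lemma IC (S : seq ((V -> C) * V)) :
  (forall p, List.In p S ->
     [/\ hdual h p.1, rootsp br h p.1 p.2 & ~ eqh h p.1 (fun _ => 0)]) ->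
  (forall y, h y -> sigma y = y -> br y (\sum_(p <- S) p.2) = 0) ->
  \sum_(p <- S) p.2 = 0.
Proof.
have [n Hn] := ubnP (size S).
elim: n S Hn => [//|n IH] [|[be v] S'] Hn HS HC; first by rewrite big_nil.
set S := (be, v) :: S'.
have [Hbe Hv Hne] := HS (be, v) (or_introl erefl).
pose Tb (p : (V -> C) * V) := `[< eqh h p.1 be >].
have Esplit : \sum_(p <- S) p.2 =
    \sum_(p <- S | Tb p) p.2 + \sum_(p <- S | ~~ Tb p) p.2 by rewrite (bigID Tb).
set t := \sum_(p <- S | Tb p) p.2.
have Ht : rootsp br h be t.
  apply: sum_In; first exact: rootsp0.
    by move=> x y; apply: rootspD.
  move=> p Hpp Tp; have [_ Hp2 _] := HS p Hpp.
  by apply: rootsp_eqh Hp2; apply/asboolP.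
have Ha y : h y -> sigma y = y -> be y *: t = 0.
  move=> hy sy.
  have Hu : rootsp br h be (br y t) by rewrite Ht //; apply: rootspZ.
  have := indep Hlie (s := [seq (p.1, br y p.2) | p <- filter (fun p => ~~ Tb p) S]) Hu.
  rewrite -Ht //; apply.
    move=> p /List.in_map_iff [q [<- Hq]] /=.
    have [Hq1 Tq] := In_filter Hq; have [_ Hq2 _] := HS q Hq1.
    split; first by rewrite Hq2 //; apply: rootspZ.
    by move=> E; move/negP: Tq; apply; apply/asboolP.
  rewrite big_map big_filter -(lin_sum (br_linr Hlie y)) -(brDr Hlie) -Esplit.
  exact: HC.
have Ht0 : t = 0.
  case: (eqVneq t 0) => [//|tn0].
  have Hfix0 y : h y -> sigma y = y -> be y = 0.
    move=> hy sy; move/eqP: (Ha y hy sy).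
    by rewrite scaler_eq0 (negbTE tn0) orbF => /eqP.
  set q := Pavg t.
  have hq : h q.
    apply: (proj1 (Hcent (Pavg_fix t))) => y hy sy.
    rewrite /q /Pavg (lin_sum (br_linr Hlie y)) big1 // => i _.
    rewrite -{1}(sig_fix i sy) -sig_br Ht // Hfix0 // scale0r.
    exact: (lin0 (sig_lin i)).
  have Hsr i : (i <= m)%N -> rootsp br h (fun z => be (sig (m - i) z)) (sig i t).
    move=> Hi z hz; rewrite -{1}(sig_mi z Hi) -sig_br Ht; last exact: sig_h.
    exact: (linZ (sig_lin i)).
  apply: (indep Hlie (gam := be) (s := (fun _ => 0, - q) ::
     [seq ((fun z => be (sig (m - i.+1) z)), sig i.+1 t) | i <- iota 0 m.-1]) Ht).
    move=> p [<-|/List.in_map_iff [i [<- Hi]]] /=.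
      split; first by apply: (rootspN Hlie); apply/Hh0.
      by move=> E; apply: Hne => z hz; exact: esym (E z hz).
    have := In_iota Hi; rewrite add0n => /andP [_ Hi'].
    have mg := m_gt0.
    split; first by apply: Hsr; lia.
    move=> E; apply: Hne; apply: (orbit_lem Hbe Hfix0 _ E).
    apply/andP; split; lia.
  rewrite big_cons big_map /q /Pavg (sum_shift _ m_gt0) /=.
  by rewrite opprD addrNK addrN.
rewrite Esplit (_ : \sum_(p <- S | Tb p) p.2 = 0) ?add0r; last exact: Ht0.
rewrite -big_filter.
have TbS : Tb (be, v) by apply/asboolP => z hz.
apply: IH.
- rewrite /= TbS /= size_filter; apply: leq_ltn_trans (count_size _ _) _.
  by rewrite ltnS in Hn.
- by move=> p Hpp; apply: HS; exact: (In_filter Hpp).1.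
- move=> y hy sy; rewrite big_filter.
  have E0 : \sum_(p <- S | Tb p) p.2 = 0 := Ht0.
  by have := HC y hy sy; rewrite Esplit E0 add0r.
Qed.

Lemma Mcent x : (forall y, h y -> sigma y = y -> br y x = 0) -> h x.
Proof.
move=> Hx.
have [n [al [xs [Hax Ex]]]] := Hdec x.
set s := [seq (al i, xs i) | i <- index_enum 'I_n].
have Es : x = \sum_(p <- s) p.2 by rewrite Ex big_map.
pose Z (p : (V -> C) * V) := `[< eqh h p.1 (fun _ => 0) >].
have Es2 : x = \sum_(p <- s | Z p) p.2 + \sum_(p <- s | ~~ Z p) p.2.
  by rewrite Es (bigID Z).
set u0 := \sum_(p <- s | Z p) p.2.
have hu0 : h u0.
  apply: sum_In; first exact: (h0 Hsub).
    by move=> a b; apply: (hD Hsub).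
  move=> p Hpp Zp; case/List.in_map_iff: Hpp => i [Ep _]; subst p.
  by apply: (rootsp_h Hh0 (al := al i)); [exact/asboolP | exact: (Hax i).2].
have HS0 : \sum_(p <- s | ~~ Z p) p.2 = 0.
  rewrite -big_filter; apply: IC.
    move=> p Hpq; have [Hpp Zp] := In_filter Hpq; case/List.in_map_iff: Hpp => i [Ep _]; subst p => /=.
    have [H1 H2] := Hax i; split => // E.
    by move/negP: Zp; apply; apply/asboolP.
  move=> y hy sy; rewrite big_filter.
  have := Hx y hy sy; rewrite Es2 (brDr Hlie) (h_comm Hh0 hy hu0) add0r.
  by [].
by rewrite Es2 HS0 addr0.
Qed.

End Sig.

Section Pik.
Variables (C : numClosedFieldType) (V : lmodType C).
Variables (sigma : V -> V) (m : nat) (w : C).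
Hypothesis Hsl : lin sigma.
Hypothesis Hm : forall x, iter m sigma x = x.
Hypothesis Hw : m.-primitive_root w.
Hypothesis Hp : prime m.

Local Notation sig j := (iter j sigma).

Lemma w_neq0 : w != 0.
Proof.
apply/eqP => w0; have := prim_expr_order Hw; rewrite w0 expr0n.
have := m_gt0 Hp; case: m => // n _ /= /eqP; by rewrite eq_sym oner_eq0.
Qed.

Lemma wmk (k : int) : w ^ (m%:Z * k) = 1.
Proof. by rewrite -exprz_exp -exprnP (prim_expr_order Hw) exp1rz. Qed.

Lemma wD (a b : int) : w ^ (a + b) = w ^ a * w ^ b.
Proof. exact: expfzDr w_neq0. Qed.

Lemma pik_lin k : lin (pik sigma m w k).
Proof.
move=> a x y; rewrite /pik scalerA mulrC -scalerA -scalerDr; congr (_ *: _).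
rewrite scaler_sumr -big_split /=; apply: eq_bigr => i _.
by rewrite (sig_lin Hsl) scalerDr !scalerA mulrC.
Qed.

Lemma pik_sig k x : sigma (pik sigma m w k x) = w ^ k *: pik sigma m w k x.
Proof.
rewrite /pik (linZ Hsl) (lin_sum Hsl) scalerA mulrC -scalerA; congr (_ *: _).
rewrite scaler_sumr.
have := m_gt0 Hp; have := wmk k; have := Hm x; case: m => [//|m'] Hm' Hwm _.
rewrite [LHS]big_ord_recr [RHS]big_ord_recl /= addrC; congr (_ + _).
  rewrite (linZ Hsl) -[sigma (iter m' sigma x)]/(iter m'.+1 sigma x) Hm' scalerA.
  rewrite mul0r oppr0 expr0z mulr1; congr (_ *: _).
  rewrite -[LHS]mul1r -Hwm -wD; congr (w ^ _).
  by rewrite -addn1 PoszD; ring.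
apply: eq_bigr => i _; rewrite (linZ Hsl) scalerA -wD; congr (w ^ _ *: _).
by rewrite /bump /= add1n -addn1 PoszD; ring.
Qed.

Lemma sig_eig k x : sigma x = w ^ k *: x -> forall i, sig i x = w ^ ((i : nat)%:Z * k) *: x.
Proof.
move=> Hx; elim => [|i IH] /=; first by rewrite mul0r expr0z scale1r.
rewrite IH (linZ Hsl) Hx scalerA -wD; congr (w ^ _ *: _).
by rewrite -addn1 PoszD; ring.
Qed.

Lemma pik_id k x : sigma x = w ^ k *: x -> pik sigma m w k x = x.
Proof.
move=> Hx; rewrite /pik.
rewrite (eq_bigr (fun _ => x)) => [|i _]; last first.
  by rewrite (sig_eig Hx) scalerA -wD addNr expr0z scale1r.
rewrite sumr_const card_ord -scaler_nat scalerA mulVf ?scale1r //.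
exact: mR_neq0.
Qed.

End Pik.

Section AffBasics.
Variables (C : numClosedFieldType) (V : lmodType C).
Variables (br : V -> V -> V) (B : V -> V -> C).

Definition Xk (k : int) (v : V) : aff V := Aff (fun n : int => if n == k then v else 0) 0 0.

Lemma aff_br0 (H X : aff V) : aff_br br B 0 H X =
  Aff (fun n => br (aloop H 0) (aloop X n) + (ader H * n%:~R) *: aloop X n
                 - (ader X * n%:~R) *: aloop H n) 0 0.
Proof.
rewrite /aff_br; congr Aff; last by rewrite big_ord1 /= subrr mul0r.
by apply: funext => n; rewrite big_ord1 /= subrr subr0.
Qed.

Lemma aff_eq (X Y : aff V) : (forall n, aloop X n = aloop Y n) -> acen X = acen Y ->
  ader X = ader Y -> X = Y.
Proof. by case: X => f c d; case: Y => f' c' d' /= /funext -> -> ->. Qed.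

End AffBasics.

Section Part1.
Variables (C : numClosedFieldType) (V : lmodType C).
Variables (br : V -> V -> V) (B : V -> V -> C) (h : V -> Prop).
Hypothesis Hlie : is_lie br.
Hypothesis Hsub : subspace h.
Hypothesis Hh0 : forall x, rootsp br h (fun _ => 0) x <-> h x.
Hypothesis Hdec : forall x, exists n (al : 'I_n -> V -> C) (xs : 'I_n -> V),
          (forall i, hdual h (al i) /\ rootsp br h (al i) (xs i)) /\
          x = \sum_(i < n) xs i.
Variables (sigma : V -> V) (m : nat) (w : C).
Hypothesis Hsl : lin sigma.
Hypothesis Hsb : forall x y, sigma (br x y) = br (sigma x) (sigma y).
Hypothesis Hm : forall x, iter m sigma x = x.
Hypothesis Hhs : forall x, h x <-> h (sigma x).
Hypothesis Hcent : forall x, sigma x = x ->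
     ((forall y, h y -> sigma y = y -> br y x = 0) <-> h x).
Hypothesis Hp : prime m.
Hypothesis Hw : m.-primitive_root w.

Local Notation sig j := (iter j sigma).

Lemma br_pik_fix y (k : int) x : h y -> sigma y = y -> h x -> br y (pik sigma m w k x) = 0.
Proof.
move=> hy sy hx; rewrite /pik (brZr Hlie) (lin_sum (br_linr Hlie y)) big1 ?scaler0 // => i _.
rewrite (brZr Hlie) -{1}(sig_fix i sy) -(sig_br Hsb) (h_comm Hh0 hy hx).
by rewrite (lin0 (sig_lin Hsl i)) scaler0.
Qed.

Lemma part1 (k : int) : k != 0 -> forall X,
  kdelta_space br B h sigma w k X <-> pik_h_tk h sigma m w k X.
Proof.
move=> k0 X; split.
  move=> [[_ HXs] HX].
  have H1 : in_htilde h sigma (Aff (fun _ => 0) 0 1).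
    by split => //=; [apply: (h0 Hsub) | apply: (lin0 Hsl)].
  have E1 := HX _ H1; rewrite aff_br0 /aff_scale /= in E1.
  have kR : (k%:~R : C) != 0 by rewrite intr_eq0.
  have dX : ader X = 0.
    have := congr1 (fun Y => ader Y) E1; rewrite /= mulr1 => /esym/eqP.
    by rewrite mulf_eq0 (negbTE kR) /= => /eqP.
  have cX : acen X = 0.
    have := congr1 (fun Y => acen Y) E1; rewrite /= mulr1 => /esym/eqP.
    by rewrite mulf_eq0 (negbTE kR) /= => /eqP.
  have Xn n : n != k -> aloop X n = 0.
    move=> nk; have := congr1 (fun Y => aloop Y n) E1.
    rewrite /= (br0l Hlie) add0r scaler0 subr0 mul1r mulr1 => /eqP.
    rewrite -subr_eq0 -scalerBl scaler_eq0 subr_eq0 eqr_int (negbTE nk) /=.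
    by move/eqP.
  have Xc y : h y -> sigma y = y -> br y (aloop X k) = 0.
    move=> hy sy.
    have Hy : in_htilde h sigma (Aff (fun n => if n == 0 then y else 0) 0 0).
      by split => //= n /negbTE ->.
    have := congr1 (fun Y => aloop Y k) (HX _ Hy).
    by rewrite aff_br0 /= ?eqxx dX ?mul0r ?mulr0 ?scale0r ?addr0 ?subr0.
  have hX : h (aloop X k).
    apply: (Mcent Hlie Hsub Hh0 Hdec Hsl Hsb Hm Hhs Hcent Hp) => y hy sy.
    exact: Xc.
  exists (aloop X k); split => //.
  apply: aff_eq => //= n.
  case: ifP => [/eqP -> | /negbT nk]; last exact: Xn.
  by rewrite (pik_id Hsl Hw Hp (HXs k)).
move=> [y [hy ->]]; split.
  split.
    exists `|k|%N => n Hn /=; case: ifP => // /eqP nk.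
    by rewrite nk ltnn in Hn.
  move=> n /=; case: ifP => [/eqP -> | _]; first exact: (pik_sig Hsl Hm Hw Hp).
  by rewrite (lin0 Hsl) scaler0.
move=> H [HH hH0 sH0]; rewrite aff_br0 /aff_scale /=.
apply: aff_eq => //=; rewrite ?mulr0 // => n.
case: ifP => [/eqP -> | _].
  by rewrite (br_pik_fix _ hH0 sH0 hy) add0r mul0r scale0r subr0 mulrC.
by rewrite (br0r Hlie) !scaler0 add0r mul0r scale0r subr0.
Qed.

End Part1.

Lemma In_nth (T : Type) (x0 : T) (s : seq T) i : (i < size s)%N -> List.In (nth x0 s i) s.
Proof.
elim: s i => [//|x s IH] [|i] //=; first by left.
by move=> Hi; right; apply: IH.
Qed.

Lemma In_nth_ex (T : Type) (x0 : T) (s : seq T) p : List.In p s ->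
  exists j : 'I_(size s), nth x0 s j = p.
Proof.
elim: s => [//|x s IH] /= [<-|/IH [j Hj]]; first by exists ord0.
by exists (lift ord0 j).
Qed.

Section Span.
Variables (C : numClosedFieldType) (V : lmodType C).
Local Notation PT := ((V -> C) * V)%type.

Inductive lc (r : seq PT) : V -> Prop :=
| lc0 : lc r 0
| lcS p a x : List.In p r -> lc r x -> lc r (a *: p.2 + x).

Lemma lc_ZD r a x y : lc r x -> lc r y -> lc r (a *: x + y).
Proof.
elim => [|p b x' Hp _ IH] Hy; first by rewrite scaler0 add0r.
rewrite scalerDr scalerA -addrA; apply: lcS => //; exact: IH.
Qed.
Lemma lc_D r x y : lc r x -> lc r y -> lc r (x + y).
Proof. by move=> Hx Hy; rewrite -[x]scale1r; apply: lc_ZD. Qed.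
Lemma lc_Z r a x : lc r x -> lc r (a *: x).
Proof. by move=> Hx; rewrite -[_ *: _]addr0; apply: lc_ZD => //; apply: lc0. Qed.
Lemma lc_mem r p : List.In p r -> lc r p.2.
Proof. by move=> Hp; rewrite -[p.2]addr0 -[p.2]scale1r; apply: lcS => //; apply: lc0. Qed.
Lemma lc_sub r r' x : (forall q, List.In q r -> lc r' q.2) -> lc r x -> lc r' x.
Proof.
move=> Hq; elim => [|p a y Hp _ IH]; first exact: lc0.
by apply: lc_ZD => //; apply: Hq.
Qed.
Lemma lc_sum r (I : Type) (l : seq I) (P : pred I) (F : I -> V) :
  (forall i, List.In i l -> P i -> lc r (F i)) -> lc r (\sum_(i <- l | P i) F i).
Proof. by move=> H; apply: sum_In => //; [apply: lc0 | move=> ? ?; apply: lc_D]. Qed.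

Definition dflt : PT := (fun _ => 0, 0).
Definition vec (b : seq PT) (i : nat) : V := (nth dflt b i).2.

Definition indep_idx (b : seq PT) :=
  forall c : 'I_(size b) -> C, \sum_(i < size b) c i *: vec b i = 0 -> forall i, c i = 0.

Lemma lc_idx b (c : 'I_(size b) -> C) : lc b (\sum_(i < size b) c i *: vec b i).
Proof. by apply: lc_sum => i _ _; apply: lc_Z; apply: lc_mem; apply: In_nth. Qed.

Lemma lc_to_idx b x : lc b x -> exists c : 'I_(size b) -> C, x = \sum_(i < size b) c i *: vec b i.
Proof.
elim => [|p a y Hp _ [c ->]].
  by exists (fun _ => 0); rewrite big1 // => i _; rewrite scale0r.
case: (In_nth_ex dflt Hp) => j Hj.
exists (fun i => c i + (i == j)%:R * a).
rewrite [RHS](eq_bigr (fun i => c i *: vec b i + ((i == j)%:R * a) *: vec b i)); last first.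
  by move=> i _; rewrite scalerDl.
rewrite big_split /= addrC; congr (_ + _).
rewrite (bigD1 j) //= eqxx mul1r big1 ?addr0; first by rewrite /vec Hj.
by move=> i /negbTE ->; rewrite mul0r scale0r.
Qed.

Variable (P : PT -> Prop).

Lemma basis_ex r : (forall p, List.In p r -> P p) ->
  exists b, [/\ (forall p, List.In p b -> P p), (forall x, lc r x -> lc b x) & indep_idx b].
Proof.
elim: r => [|p r IH] HP.
  by exists [::]; split => // c _ [].
have [b [Hb1 Hb2 Hb3]] := IH (fun q Hq => HP q (or_intror Hq)).
case: (pselect (lc b p.2)) => Hpb.
  exists b; split => // x; apply: lc_sub => q [<-|Hq] //.
  by apply: Hb2; apply: lc_mem.
exists (p :: b); split.
- by move=> q [<-|Hq]; [apply: HP; left | apply: Hb1].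
- move=> x; apply: lc_sub => q [<-|Hq]; first by apply: lc_mem; left.
  apply: (lc_sub (r := b)); first by move=> q' Hq'; apply: lc_mem; right.
  by apply: Hb2; apply: lc_mem.
- move=> c; rewrite /= big_ord_recl => E.
  have c0 : c ord0 = 0.
    apply/eqP; apply/negP => /negP cn0; apply: Hpb.
    have -> : p.2 = - (c ord0)^-1 *: \sum_(i < size b) c (lift ord0 i) *: vec b i.
      apply: (@scalerI _ _ (c ord0)) => //.
      rewrite scalerA mulrN mulfV // scaleN1r.
      by apply/eqP; rewrite -addr_eq0; apply/eqP; exact: E.
    exact/lc_Z/lc_idx.
  rewrite c0 scale0r add0r in E.
  have Hl := Hb3 (fun i => c (lift ord0 i)) E.
  by move=> i; case: (unliftP ord0 i) => [j ->|->].
Qed.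

End Span.

Section Coord.
Variables (C : numClosedFieldType) (V : lmodType C).
Local Notation PT := ((V -> C) * V)%type.
Variable b : seq PT.
Hypothesis Hspan : forall x, lc b x.
Hypothesis Hind : indep_idx b.
Local Notation d := (size b).
Local Notation v := (vec b).

Definition coord (x : V) : 'I_d -> C := sval (cid (lc_to_idx (Hspan x))).
Lemma coordP x : x = \sum_(i < d) coord x i *: v i.
Proof. exact: (svalP (cid (lc_to_idx (Hspan x)))). Qed.

Lemma coord_uniq x (c : 'I_d -> C) : x = \sum_(i < d) c i *: v i -> forall i, coord x i = c i.
Proof.
move=> Hx i.
have H0 : \sum_(i < d) (coord x i - c i) *: v i = 0.
  rewrite (eq_bigr (fun i => coord x i *: v i - c i *: v i)) => [|j _]; last by rewrite scalerBl.
  by rewrite sumrB -coordP -Hx subrr.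
by move/eqP: (Hind H0 i); rewrite subr_eq0 => /eqP.
Qed.

Lemma coord_ZD a x y i : coord (a *: x + y) i = a * coord x i + coord y i.
Proof.
apply: (coord_uniq (c := fun i => a * coord x i + coord y i)).
rewrite [RHS](eq_bigr (fun i => a *: (coord x i *: v i) + coord y i *: v i)) => [|j _]; last first.
  by rewrite scalerDl scalerA.
by rewrite big_split /= -scaler_sumr -!coordP.
Qed.

Lemma coord0 i : coord 0 i = 0.
Proof.
apply: (coord_uniq (c := fun _ => 0)).
by rewrite big1 // => j _; rewrite scale0r.
Qed.
Lemma coordD x y i : coord (x + y) i = coord x i + coord y i.
Proof. by have := coord_ZD 1 x y i; rewrite scale1r mul1r. Qed.
Lemma coordZ a x i : coord (a *: x) i = a * coord x i.
Proof. by have := coord_ZD a x 0 i; rewrite addr0 coord0 addr0. Qed.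
Lemma coordN x i : coord (- x) i = - coord x i.
Proof. by rewrite -scaleN1r coordZ mulN1r. Qed.
Lemma coordB x y i : coord (x - y) i = coord x i - coord y i.
Proof. by rewrite coordD coordN. Qed.
Lemma coord_sum (I : Type) (r : seq I) (P : pred I) (F : I -> V) i :
  coord (\sum_(j <- r | P j) F j) i = \sum_(j <- r | P j) coord (F j) i.
Proof. by apply: (big_morph (fun x => coord x i)) => [x y|]; [apply: coordD | apply: coord0]. Qed.

Lemma coord_vec (j i : 'I_d) : coord (v j) i = (i == j)%:R.
Proof.
apply: (coord_uniq (c := fun i => (i == j)%:R)); rewrite (bigD1 j) //= eqxx scale1r big1 ?addr0 //.
by move=> k /negbTE ->; rewrite scale0r.
Qed.

Definition tr (A : V -> V) := \sum_(j < d) coord (A (v j)) j.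

Lemma tr_comm A B' : lin A -> lin B' -> tr (fun x => A (B' x)) = tr (fun x => B' (A x)).
Proof.
move=> HA HB.
have E (F G : V -> V) : lin F -> tr (fun x => F (G x)) =
    \sum_(j < d) \sum_(l < d) coord (G (v j)) l * coord (F (v l)) j.
  move=> HF; apply: eq_bigr => j _.
  rewrite {1}(coordP (G (v j))) (lin_sum HF) coord_sum; apply: eq_bigr => l _.
  by rewrite (linZ HF) coordZ.
rewrite (E _ _ HA) (E _ _ HB) exchange_big /=; apply: eq_bigr => j _.
by apply: eq_bigr => l _; rewrite mulrC.
Qed.

Lemma tr_sub A B' : tr (fun x => A x - B' x) = tr A - tr B'.
Proof. by rewrite /tr -sumrB; apply: eq_bigr => j _; rewrite coordB. Qed.

End Coord.

Lemma PS (C : numClosedFieldType) d (c : 'I_d -> C) :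
  (forall n, \sum_(j < d) c j ^+ n.+1 = 0) -> forall j, c j = 0.
Proof.
move=> Hs j0; apply/eqP; apply/negP => /negP cj0.
pose p := 'X * \prod_(l < d | c l != c j0) ('X - (c l)%:P).
have Hp j : p.[c j] = (c j == c j0)%:R * p.[c j0].
  rewrite /p !hornerM !hornerX !horner_prod.
  case: (eqVneq (c j) (c j0)) => [->|ne]; first by rewrite mul1r.
  by rewrite mul0r (bigD1 j) /= ?ne // hornerXsubC subrr mul0r mulr0.
have P0 : p.[c j0] != 0.
  rewrite /p hornerM hornerX horner_prod mulf_neq0 //.
  apply/prodf_neq0 => l Hl; rewrite hornerXsubC subr_eq0 eq_sym; exact: Hl.
have S0 : \sum_(j < d) p.[c j] = 0.
  rewrite (eq_bigr (fun j => \sum_(n < size p) p`_n * c j ^+ n)) => [|j _]; last by rewrite horner_coef.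
  rewrite exchange_big /= big1 // => [[[|n] Hn]] _ /=.
    by rewrite /p coefXM eqxx big1 // => j _; rewrite mul0r.
  by rewrite -mulr_sumr Hs mulr0.
have : \sum_(j < d) p.[c j] != 0.
  rewrite (eq_bigr (fun j => (c j == c j0)%:R * p.[c j0])) => [|j _]; last exact: Hp.
  rewrite -big_distrl /= mulf_neq0 // -natr_sum pnatr_eq0 (bigD1 j0) //= eqxx.
  by [].
by rewrite S0 eqxx.
Qed.

Section Heis.
Variables (C : numClosedFieldType) (V : lmodType C).
Variables (br : V -> V -> V) (h : V -> Prop).
Hypothesis Hlie : is_lie br.
Hypothesis Hsub : subspace h.
Hypothesis Hh0 : forall x, rootsp br h (fun _ => 0) x <-> h x.
Hypothesis Hdec : forall x, exists n (al : 'I_n -> V -> C) (xs : 'I_n -> V),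
          (forall i, hdual h (al i) /\ rootsp br h (al i) (xs i)) /\
          x = \sum_(i < n) xs i.
Hypothesis Hfin : finite_dim (fun _ : V => True).
Hypothesis Hsimp : simple_lie br.

Lemma center z : (forall x, br x z = 0) -> z = 0.
Proof.
move=> Hz; case: Hsimp => [[x0 [y0 Hxy]] Hid].
have HI : lie_ideal br (fun z => forall x, br x z = 0).
  split; last by move=> x y Hy x'; rewrite Hy (br0r Hlie).
  split; first by move=> x; rewrite (br0r Hlie).
  by move=> a x y Hx Hy x'; rewrite (brDr Hlie) (brZr Hlie) Hx Hy scaler0 addr0.
case: (Hid _ HI) => [H|H]; first exact: H.
by move: Hxy; rewrite (H y0 x0) eqxx.
Qed.

Lemma span_roots : exists r : seq ((V -> C) * V),
  (forall p, List.In p r -> rootsp br h p.1 p.2) /\ forall x, lc r x.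
Proof.
case: Hfin => s Hs.
have [r [Hr1 Hr2]] : exists r : seq ((V -> C) * V),
    (forall p, List.In p r -> rootsp br h p.1 p.2) /\ forall x, List.In x s -> lc r x.
  elim: s {Hs} => [|x s [r [Hr1 Hr2]]]; first by exists [::].
  have [n [al [xs [Hax ->]]]] := Hdec x.
  exists ([seq (al i, xs i) | i <- index_enum 'I_n] ++ r); split.
    move=> p Hp0; case: (List.in_app_or _ _ _ Hp0) => [Hm|Hp]; last exact: Hr1.
    by case/List.in_map_iff: Hm => i [<- _]; exact: (Hax i).2.
  move=> y [<-|Hy].
    have -> : \sum_(i < n) xs i = \sum_(p <- [seq (al i, xs i) | i <- index_enum 'I_n]) p.2.
      by rewrite big_map.
    apply: lc_sum => p Hp _; apply: lc_mem; apply: List.in_or_app; by left.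
  apply: (lc_sub (r := r)); last exact: Hr2.
  by move=> q Hq; apply: lc_mem; apply: List.in_or_app; right.
exists r; split => // x.
have [c ->] := (proj1 (Hs x)) I.
apply: lc_sum => i _ _; apply: lc_Z; apply: Hr2; apply: In_nth; exact: ltn_ord.
Qed.

Lemma Heis T E F : h T -> T = br E F -> br T E = 0 -> br T F = 0 -> T = 0.
Proof.
move=> hT TEF HTE HTF.
have [r [Hr1 Hr2]] := span_roots.
have [b [Hb1 Hb2 Hind]] := basis_ex Hr1.
have Hspan : forall x, lc b x by move=> x; apply: Hb2.
pose be (j : nat) := (nth (dflt V) b j).1.
have Hroot j : (j < size b)%N -> rootsp br h (be j) (vec b j).
  by move=> Hj; apply: Hb1; apply: In_nth.
have Hpow n (j : 'I_(size b)) : iter n (br T) (vec b j) = (be j T) ^+ n *: vec b j.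
  elim: n => [|n IH] /=; first by rewrite scale1r.
  by rewrite IH (brZr Hlie) (Hroot j (ltn_ord j)) // scalerA exprSr.
have comm n x : iter n (br T) (br E x) = br E (iter n (br T) x).
  elim: n => [//|n IH] /=; rewrite IH (br_jac Hlie T E) HTE (br0l Hlie) add0r //.
have linT n : lin (iter n (br T)) by apply: lin_iter; apply: br_linr.
have trn n : tr Hspan (iter n.+1 (br T)) = \sum_(j < size b) (be j T) ^+ n.+1.
  apply: eq_bigr => j _; rewrite Hpow (coordZ Hspan Hind) (coord_vec Hspan Hind) eqxx.
  by rewrite mulr1.
have trz n : tr Hspan (iter n.+1 (br T)) = 0.
  pose G x := br F (iter n (br T) x).
  have linG : lin G by apply: lin_comp; [apply: br_linr | apply: linT].
  have -> : iter n.+1 (br T) = fun x => br E (G x) - G (br E x).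
    apply: funext => x; rewrite /G comm /= TEF.
    by rewrite (br_jac Hlie E F) addrK.
  rewrite (tr_sub Hspan Hind) (tr_comm Hspan Hind (br_linr Hlie E) linG).
  by rewrite subrr.
have Hz := PS (c := fun j : 'I_(size b) => be j T) (fun n => etrans (esym (trn n)) (trz n)).
apply: center => x; rewrite (br_anti Hlie) (coordP Hspan x) (lin_sum (br_linr Hlie T)).
rewrite big1 ?oppr0 // => j _; rewrite (brZr Hlie) (Hroot j (ltn_ord j)) //.
by rewrite Hz scale0r scaler0.
Qed.

End Heis.

Lemma sum_shiftZ (R : zmodType) n (F : nat -> R) : (0 < n)%N ->
  \sum_(i < n) F i = F 0%N + \sum_(i <- iota 0 n.-1) F i.+1.
Proof.
case: n => [//|n] _; rewrite big_ord_recl /=; congr (_ + _).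
by rewrite -(big_mkord xpredT (fun i => F i.+1)) /index_iota subn0.
Qed.

Section Form.
Variables (C : numClosedFieldType) (V : lmodType C).
Variables (br : V -> V -> V) (B : V -> V -> C) (h : V -> Prop).
Hypothesis Hlie : is_lie br.
Hypothesis Hsub : subspace h.
Hypothesis Hh0 : forall x, rootsp br h (fun _ => 0) x <-> h x.
Hypothesis Hdec : forall x, exists n (al : 'I_n -> V -> C) (xs : 'I_n -> V),
          (forall i, hdual h (al i) /\ rootsp br h (al i) (xs i)) /\
          x = \sum_(i < n) xs i.
Hypothesis Hform : good_form br B.

Lemma BZDl a x y z : B (a *: x + y) z = a * B x z + B y z.
Proof. by case: Hform => H _ _ _; apply: H. Qed.
Lemma Bsym x y : B x y = B y x. Proof. by case: Hform => _ H _ _; apply: H. Qed.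
Lemma Bnd x : (forall y, B x y = 0) -> x = 0. Proof. by case: Hform => _ _ H _; apply: H. Qed.
Lemma Binv x y z : B (br x y) z = B x (br y z). Proof. by case: Hform => _ _ _ H; apply: H. Qed.
Lemma B0l z : B 0 z = 0.
Proof.
have := BZDl 1 0 0 z; rewrite scaler0 addr0 mul1r.
by move=> E; apply: (@addrI _ (B 0 z)); rewrite addr0 -E.
Qed.
Lemma BDl x y z : B (x + y) z = B x z + B y z.
Proof. by have := BZDl 1 x y z; rewrite scale1r mul1r. Qed.
Lemma BZl a x z : B (a *: x) z = a * B x z.
Proof. by have := BZDl a x 0 z; rewrite addr0 B0l addr0. Qed.
Lemma BNl x z : B (- x) z = - B x z.
Proof. by rewrite -scaleN1r BZl mulN1r. Qed.
Lemma B0r z : B z 0 = 0. Proof. by rewrite Bsym B0l. Qed.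
Lemma BDr x y z : B z (x + y) = B z x + B z y. Proof. by rewrite !(Bsym z) BDl. Qed.
Lemma BZr a x z : B z (a *: x) = a * B z x. Proof. by rewrite !(Bsym z) BZl. Qed.
Lemma BNr x z : B z (- x) = - B z x. Proof. by rewrite !(Bsym z) BNl. Qed.
Lemma Bsuml (I : Type) (r : seq I) (P : pred I) (F : I -> V) z :
  B (\sum_(i <- r | P i) F i) z = \sum_(i <- r | P i) B (F i) z.
Proof. by apply: (big_morph (fun x => B x z)) => [x y|]; [apply: BDl | apply: B0l]. Qed.
Lemma Bsumr (I : Type) (r : seq I) (P : pred I) (F : I -> V) z :
  B z (\sum_(i <- r | P i) F i) = \sum_(i <- r | P i) B z (F i).
Proof. by rewrite Bsym Bsuml; apply: eq_bigr => i _; rewrite Bsym. Qed.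

Lemma B_orth_y al be e f y : rootsp br h al e -> rootsp br h be f -> h y ->
  (al y + be y) * B e f = 0.
Proof.
move=> He Hf hy.
have E1 : B (br y e) f = al y * B e f by rewrite He // BZl.
have E2 : B e (br y f) = be y * B e f by rewrite Hf // BZr.
have E3 : B e (br y f) = - B (br y e) f by rewrite -Binv (br_anti Hlie) BNl.
by rewrite mulrDl -E1 -E2 E3 addrN.
Qed.

Lemma B_orth al be e f : rootsp br h al e -> rootsp br h be f ->
  ~ eqh h (fun z => al z + be z) (fun _ => 0) -> B e f = 0.
Proof.
move=> He Hf Hne; case: (neq_eqh Hne) => y [hy Hy].
by move/eqP: (B_orth_y He Hf hy); rewrite mulf_eq0 (negbTE Hy) => /eqP.
Qed.

Lemma nondeg_h u : h u -> (forall y, h y -> B y u = 0) -> u = 0.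
Proof.
move=> hu Hu; apply: Bnd => z; rewrite Bsym.
have [n [al [xs [Hax ->]]]] := Hdec z.
rewrite Bsuml big1 // => i _.
have [Ha Hx] := Hax i.
case: (pselect (eqh h (al i) (fun _ => 0))) => E.
  by apply: Hu; apply: (rootsp_h Hh0 E Hx).
apply: (B_orth Hx (proj2 (Hh0 u) hu)) => E2; apply: E => y hy.
by have := E2 y hy; rewrite /= addr0.
Qed.

End Form.

Section Part2.
Variables (C : numClosedFieldType) (V : lmodType C).
Variables (br : V -> V -> V) (B : V -> V -> C) (h : V -> Prop).
Hypothesis Hlie : is_lie br.
Hypothesis Hsub : subspace h.
Hypothesis Hh0 : forall x, rootsp br h (fun _ => 0) x <-> h x.
Hypothesis Hdec : forall x, exists n (al : 'I_n -> V -> C) (xs : 'I_n -> V),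
          (forall i, hdual h (al i) /\ rootsp br h (al i) (xs i)) /\
          x = \sum_(i < n) xs i.
Hypothesis Hform : good_form br B.
Variables (sigma : V -> V) (m : nat) (w : C).
Hypothesis Hsl : lin sigma.
Hypothesis Hsb : forall x y, sigma (br x y) = br (sigma x) (sigma y).
Hypothesis Hm : forall x, iter m sigma x = x.
Hypothesis Hhs : forall x, h x <-> h (sigma x).
Hypothesis HBs : forall x y, B (sigma x) (sigma y) = B x y.
Hypothesis Hcent : forall x, sigma x = x ->
     ((forall y, h y -> sigma y = y -> br y x = 0) <-> h x).
Hypothesis Hp : prime m.
Hypothesis Hw : m.-primitive_root w.
Hypothesis Hfin : finite_dim (fun _ : V => True).
Hypothesis Hsimp : simple_lie br.

Local Notation sig j := (iter j sigma).
Local Notation Pav := (Pavg sigma m).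
Local Notation hfix y := (h y /\ sigma y = y).

Let Mc := Mcent Hlie Hsub Hh0 Hdec Hsl Hsb Hm Hhs Hcent Hp.
Let mg := m_gt0 Hp.
Let mR := mR_neq0 C Hp.

Lemma B_sig i x y : B (sig i x) (sig i y) = B x y.
Proof. by elim: i x y => [//|i IH] x y /=; rewrite HBs IH. Qed.

Lemma B_Pav_fix y x : sigma y = y -> B y (Pav x) = m%:R * B y x.
Proof.
move=> sy; rewrite /Pavg (Bsumr Hform) (eq_bigr (fun _ => B y x)) => [|i _].
  by rewrite sumr_const card_ord mulr_natl.
by rewrite -{1}(sig_fix i sy) B_sig.
Qed.

Local Notation BZDl' := (BZDl Hform).
Local Notation Bsym' := (Bsym Hform).
Local Notation Binv' := (Binv Hform).
Local Notation B0l' := (B0l Hform).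
Local Notation B0r' := (B0r Hform).
Local Notation BDl' := (BDl Hform).
Local Notation BDr' := (BDr Hform).
Local Notation BZl' := (BZl Hform).
Local Notation BZr' := (BZr Hform).
Local Notation BNl' := (BNl Hform).
Local Notation BNr' := (BNr Hform).
Local Notation Bsuml' := (Bsuml Hform).
Local Notation Bsumr' := (Bsumr Hform).
Local Notation brDr' := (brDr Hlie).
Local Notation brDl' := (brDl Hlie).
Local Notation brZr' := (brZr Hlie).
Local Notation brZl' := (brZl Hlie).
Local Notation brNr' := (brNr Hlie).
Local Notation brNl' := (brNl Hlie).
Local Notation br0r' := (br0r Hlie).
Local Notation br0l' := (br0l Hlie).
Local Notation hZ' := (hZ Hsub).
Local Notation hD' := (hD Hsub).
Local Notation hN' := (hN Hsub).
Local Notation Pfix := (Pavg_fix Hsl Hm Hp).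
Local Notation Ph := (Pavg_h Hsub m Hhs).

Lemma nondeg_hs u : h u -> sigma u = u -> (forall y, h y -> sigma y = y -> B y u = 0) -> u = 0.
Proof.
move=> hu su Hu; apply: (nondeg_h Hlie Hh0 Hdec Hform hu) => y hy.
have : m%:R * B y u = 0.
  rewrite -(Hu (Pav y)); [|exact: Ph|exact: Pfix].
  rewrite /Pavg Bsuml' (eq_bigr (fun _ => B y u)) => [|i _].
    by rewrite sumr_const card_ord mulr_natl.
  by rewrite -{1}(sig_fix i su) B_sig.
by move/eqP; rewrite mulf_eq0 (negbTE mR) => /eqP.
Qed.


Local Notation Heis' := (Heis Hlie Hdec Hfin Hsimp).
Local Notation hsum' := (hdual_sum Hsub).

Lemma br_fix_sig y al e i : h y -> sigma y = y -> rootsp br h al e ->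
  br y (sig i e) = al y *: sig i e.
Proof.
move=> hy sy He; rewrite -{1}(sig_fix i sy) -(sig_br Hsb) He //.
exact: (linZ (sig_lin Hsl i)).
Qed.

Lemma br_fix_Pav y al e : h y -> sigma y = y -> rootsp br h al e ->
  br y (Pav e) = al y *: Pav e.
Proof.
move=> hy sy He; rewrite /Pavg (lin_sum (br_linr Hlie y)) scaler_sumr.
by apply: eq_bigr => i _; apply: br_fix_sig.
Qed.

Lemma br_fix_pik y al e k : h y -> sigma y = y -> rootsp br h al e ->
  br y (pik sigma m w k e) = al y *: pik sigma m w k e.
Proof.
move=> hy sy He; rewrite /pik brZr' (lin_sum (br_linr Hlie y)) [RHS]scalerA.
rewrite [al y * _]mulrC -scalerA; congr (_ *: _); rewrite scaler_sumr.
apply: eq_bigr => i _; rewrite brZr' (br_fix_sig _ hy sy He) !scalerA.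
by rewrite [_ * al y]mulrC.
Qed.

Lemma rootsp_sig al e i : (i <= m)%N -> rootsp br h al e ->
  rootsp br h (fun z => al (sig (m - i) z)) (sig i e).
Proof.
move=> Hi He z hz; rewrite -{1}(sig_mi Hm z Hi) -(sig_br Hsb) He; last exact: (sig_h Hhs).
exact: (linZ (sig_lin Hsl i)).
Qed.

Lemma rootsp_br al be e f : rootsp br h al e -> rootsp br h be f ->
  rootsp br h (fun z => al z + be z) (br e f).
Proof.
move=> He Hf y hy; rewrite (br_jac Hlie) (He y) // (Hf y) // brZl' brZr' scalerDl.
by [].
Qed.

Lemma good al be e f : hdual h al -> hdual h be -> rootsp br h al e -> rootsp br h be f ->
  eqh h (fun z => al z + be z) (fun _ => 0) -> B e f != 0 ->
  B (Pav (br e f)) (Pav (br e f)) = 0 -> br e f = 0.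
Proof.
move=> Hal Hbe He Hf Hab c0 HQQ.
have hT : h (br e f).
  by apply/Hh0; apply: (rootsp_eqh Hab); apply: rootsp_br.
have BT y : h y -> B y (br e f) = al y * B e f.
  by move=> hy; rewrite -Binv' He // BZl'.
have hQ : h (Pav (br e f)) by apply: Ph.
have sQ : sigma (Pav (br e f)) = Pav (br e f) by apply: Pfix.
have BQ y : h y -> sigma y = y -> B y (Pav (br e f)) = m%:R * (al y * B e f).
  by move=> hy sy; rewrite B_Pav_fix // BT.
have alQ : al (Pav (br e f)) = 0.
  move/eqP: (BQ _ hQ sQ); rewrite HQQ eq_sym !mulf_eq0 (negbTE mR) (negbTE c0) orbF /=.
  by move/eqP.
have beal z : h z -> be z = - al z.
  by move=> hz; apply/eqP; rewrite -addr_eq0 addrC; apply/eqP; exact: (Hab z hz).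
case: (pselect (forall z, h z -> al (sigma z) = al z)) => [HA|HB].
  have alsig i z : h z -> al (sig i z) = al z.
    elim: i z => [//|i IH] z hz /=; rewrite HA ?IH //; exact: (sig_h Hhs).
  have alT : al (br e f) = 0.
    move: alQ; rewrite /Pavg hsum' //; last by move=> i _; apply: (sig_h Hhs).
    rewrite (eq_bigr (fun _ => al (br e f))) => [|i _]; last exact: alsig.
    rewrite sumr_const card_ord -mulr_natl => /eqP; rewrite mulf_eq0 (negbTE mR) /=.
    by move/eqP.
  apply: (Heis' hT erefl).
    by rewrite He // alT scale0r.
  by rewrite Hf // beal // alT oppr0 scale0r.
exfalso.
have [z0 [hz0 Hz0]] : exists z0, h z0 /\ al (sigma z0) != al z0.
  case: (pselect (exists z0, h z0 /\ al (sigma z0) != al z0)) => [//|Hn].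
  exfalso; apply: HB => z hz; case: (eqVneq (al (sigma z)) (al z)) => // Hne.
  by exfalso; apply: Hn; exists z.
set E' := Pav e; set F' := Pav f.
have HE' y : h y -> sigma y = y -> br y E' = al y *: E' by move=> hy sy; apply: br_fix_Pav.
have HF' y : h y -> sigma y = y -> br y F' = be y *: F' by move=> hy sy; apply: br_fix_Pav.
have sE' : sigma E' = E' by apply: Pfix.
have sF' : sigma F' = F' by apply: Pfix.
have BEf : B E' f = B e f.
  rewrite /E' /Pavg Bsuml' (sum_shiftZ (fun n => B (sig n e) f) mg) /= big1_seq ?addr0 // => i /andP [_ Hi].
  rewrite mem_iota add0n in Hi.
  have Hi1 : (i.+1 <= m)%N by lia.
  apply: (B_orth Hlie Hform (rootsp_sig Hi1 He) Hf).
  move=> E; have := orbit_one Hm Hhs Hp (be := al) (e := m - i.+1) _ _ hz0.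
  move=> H; move/eqP: Hz0; apply; apply: H; first lia.
  move=> z hz; have := E z hz; rewrite /= beal // => /eqP; rewrite subr_eq0 => /eqP.
  by [].
have BEF : B E' F' = m%:R * B e f.
  rewrite /F' /Pavg Bsumr' (eq_bigr (fun _ => B E' f)) => [|i _].
    by rewrite sumr_const card_ord mulr_natl BEf.
  by rewrite -{1}(sig_fix i sE') B_sig.
set T2 := br E' F'.
have sT2 : sigma T2 = T2 by rewrite /T2 Hsb sE' sF'.
have hT2 : h T2.
  apply: (proj1 (Hcent sT2)) => y hy sy.
  rewrite /T2 (br_jac Hlie) (HE' y) // (HF' y) // brZl' brZr' -scalerDl.
  by rewrite beal // addrN scale0r.
have BT2 y : h y -> sigma y = y -> B y T2 = al y * (m%:R * B e f).
  by move=> hy sy; rewrite /T2 -Binv' HE' // BZl' BEF.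
have T2Q : T2 = Pav (br e f).
  apply/eqP; rewrite -subr_eq0; apply/eqP.
  apply: nondeg_hs; first exact: (hB Hsub hT2 hQ).
    by rewrite (linB Hsl) sT2 sQ.
  move=> y hy sy; rewrite BDr' BNr' BT2 // BQ //.
  by rewrite mulrCA subrr.
have T20 : T2 = 0.
  apply: (Heis' hT2 erefl).
    by rewrite HE' // T2Q alQ scale0r.
  by rewrite HF' // beal // T2Q alQ oppr0 scale0r.
have al0 y : h y -> sigma y = y -> al y = 0.
  move=> hy sy; move/eqP: (BQ y hy sy); rewrite -T2Q T20 B0r' eq_sym !mulf_eq0.
  by rewrite (negbTE mR) (negbTE c0) orbF /= => /eqP.
have he : h e.
  by apply: Mc => y hy sy; rewrite He // al0 // scale0r.
have e0 : e != 0 by apply: contraNneq c0 => ->; rewrite B0l'.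
have alz z : h z -> al z = 0.
  move=> hz; move/eqP: (He z hz); rewrite (h_comm Hh0 hz he) eq_sym scaler_eq0 (negbTE e0) orbF.
  by move/eqP.
by move/eqP: Hz0; apply; rewrite !alz //; apply: (proj1 (Hhs _)).
Qed.


Lemma rootvec_core (lam : V -> C) (x : V) (a : int) (t0 : V) :
  h t0 -> sigma t0 = t0 -> B t0 t0 != 0 ->
  (forall y, h y -> sigma y = y -> B y t0 = lam y) ->
  (forall y, h y -> sigma y = y -> br y x = lam y *: x) ->
  sigma x = w ^ a *: x -> aff_core br B h sigma w (Xk a x).
Proof.
move=> ht0 st0 Bt0 Hlam Hx sx.
apply: (core_root (t := Aff (fun n => if n == 0 then t0 else 0) a%:~R 0)).
- by split => //= n /negbTE ->.
- by rewrite /aff_form big_ord1 /= !mulr0 !addr0.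
- split; first by exists `|a|%N => n Hn /=; case: ifP => // /eqP E; rewrite E ltnn in Hn.
  move=> n /=; case: ifP => [/eqP -> //|_].
  by rewrite (lin0 Hsl) scaler0.
- move=> H [HH hH sH]; rewrite aff_br0 /aff_scale /aff_form big_ord1 /=.
  apply: aff_eq => /=; rewrite ?mulr0 // => n.
  case: ifP => [/eqP ->|_].
    rewrite (Hx _ hH sH) Hlam // mul0r scale0r subr0 subrr addr0 -scalerDl.
    by rewrite [a%:~R * _]mulrC.
  by rewrite br0r' mul0r scale0r subr0 !scaler0 addr0.
Qed.

Lemma aff_br_Xk (a : nat) (b : int) x y N : (a <= N)%N -> a%:Z + b != 0 ->
  aff_br br B N (Xk a x) (Xk b y) = Xk (a%:Z + b) (br x y).
Proof.
move=> aN ab0.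
have i0lt : (a + N < N.*2.+1)%N by rewrite -addnn ltnS leq_add2r.
pose i0 := Ordinal i0lt.
have Ei0 : (i0 : nat)%:Z - N%:Z = a%:Z by rewrite /= PoszD addrK.
have Ene (i : 'I_N.*2.+1) : i != i0 -> ((i : nat)%:Z - N%:Z == a%:Z) = false.
  move=> ne; apply/negbTE; apply: contra ne => /eqP E; apply/eqP; apply: val_inj => /=.
  by apply/eqP; rewrite -eqz_nat PoszD -E subrK.
apply: aff_eq => /=.
- move=> n; rewrite (bigD1 i0) //= Ei0 eqxx big1 ?addr0; last first.
    by move=> i ne; rewrite Ene // br0l'.
  rewrite !mul0r !scale0r subr0 addr0.
  have -> : (n - a%:Z == b) = (n == a%:Z + b).
    by apply/eqP/eqP => [<-|->]; [rewrite addrC subrK | rewrite addrC addKr].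
  by case: ifP => // _; rewrite br0r'.
- rewrite (bigD1 i0) //= Ei0 eqxx big1 ?addr0; last first.
    by move=> i ne; rewrite Ene // B0l' mulr0.
  have -> : (- a%:Z == b) = false.
    apply/negbTE; apply: contra ab0 => /eqP <-; by rewrite addrN.
  by rewrite B0r' mulr0.
- by [].
Qed.


Lemma rou_sum (i j : nat) : (i < m)%N -> (j < m)%N ->
  \sum_(a < m) w ^ ((a : nat)%:Z * (j%:Z - i%:Z)) = (i == j)%:R * m%:R.
Proof.
move=> im jm; case: (eqVneq i j) => [->|ne].
  rewrite subrr (eq_bigr (fun _ => 1)) => [|a _]; last by rewrite mulr0 expr0z.
  by rewrite sumr_const card_ord mul1r.
rewrite mul0r.
set u := w ^ (j%:Z - i%:Z).
rewrite (eq_bigr (fun a : 'I_m => u ^+ a)) => [|a _]; last first.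
  by rewrite mulrC -exprz_exp -exprnP.
have um : u ^+ m = 1 by rewrite /u exprnP exprz_exp mulrC (wmk Hw).
have u1 : u != 1.
  apply: contra ne => /eqP u1.
  have : w ^+ j == w ^+ i.
    rewrite !exprnP -[j%:Z](subrK i%:Z) (wD Hw Hp) -/u u1 mul1r.
    by [].
  by rewrite (eq_prim_root_expr Hw) !modn_small // eq_sym.
have := subrX1 u m; rewrite um subrr => /esym/eqP.
by rewrite mulf_eq0 subr_eq0 (negbTE u1) /= => /eqP.
Qed.

Lemma br_suml (I : Type) (r : seq I) (P : pred I) (F : I -> V) z :
  br (\sum_(i <- r | P i) F i) z = \sum_(i <- r | P i) br (F i) z.
Proof. by apply: (big_morph (fun x => br x z)) => [x y|]; [apply: brDl' | apply: br0l']. Qed.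
Lemma br_sumr (I : Type) (r : seq I) (P : pred I) (F : I -> V) z :
  br z (\sum_(i <- r | P i) F i) = \sum_(i <- r | P i) br z (F i).
Proof. exact: (lin_sum (br_linr Hlie z)). Qed.

Lemma pik_br_sum e f (k : int) :
  \sum_(a < m) br (pik sigma m w (a : nat)%:Z e) (pik sigma m w (k - (a : nat)%:Z) f) =
  pik sigma m w k (br e f).
Proof.
set c := (m%:R : C)^-1.
have E1 (a : 'I_m) : br (pik sigma m w (a : nat)%:Z e) (pik sigma m w (k - (a : nat)%:Z) f) =
    \sum_(i < m) \sum_(j < m)
      (c * c * (w ^ (- ((i : nat)%:Z * (a : nat)%:Z)) * w ^ (- ((j : nat)%:Z * (k - (a : nat)%:Z))))) *:
        br (sig i e) (sig j f).
  rewrite /pik brZl' brZr' br_suml scalerA scaler_sumr; apply: eq_bigr => i _.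
  rewrite brZl' br_sumr scaler_sumr scaler_sumr; apply: eq_bigr => j _.
  by rewrite brZr' !scalerA; congr (_ *: _); rewrite /c; ring.
rewrite (eq_bigr _ (fun a _ => E1 a)) exchange_big /=.
rewrite /pik scaler_sumr; apply: eq_bigr => i _.
rewrite exchange_big /= (bigD1 i) //= [X in _ + X]big1 ?addr0; last first.
  move=> j ne; rewrite -scaler_suml.
  rewrite (eq_bigr (fun a : 'I_m => c * c * w ^ (- ((j : nat)%:Z * k)) *
             w ^ ((a : nat)%:Z * ((j : nat)%:Z - (i : nat)%:Z)))) => [|a _].
    rewrite -mulr_sumr rou_sum // (_ : (i : nat) == j = false) ?mul0r ?mulr0 ?scale0r //.
    by apply/negbTE; rewrite eq_sym.
  by rewrite -[RHS]mulrA -!(wD Hw Hp); congr (_ * w ^ _); ring.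
rewrite -scaler_suml (eq_bigr (fun a : 'I_m => c * c * w ^ (- ((i : nat)%:Z * k)))) => [|a _].
  rewrite sumr_const card_ord -mulr_natr -(sig_br Hsb) scalerA; congr (_ *: _).
  have cm : c * m%:R = 1 by rewrite mulVf.
  rewrite mul1r -/c; transitivity ((c * m%:R) * (c * w ^ (- ((i : nat)%:Z * k)))).
    by ring.
  by rewrite cm mul1r.
by rewrite -(wD Hw Hp); congr (_ * w ^ _); ring.
Qed.


Lemma Xk0 (k : int) : Xk k (0 : V) = aff_zero V.
Proof. by apply: aff_eq => //= n; case: ifP. Qed.

Lemma Xk_ZD (k : int) (a : C) (x y : V) : Xk k (a *: x + y) = aff_add (aff_scale a (Xk k x)) (Xk k y).
Proof.
apply: aff_eq => /=; rewrite ?mulr0 ?addr0 // => n.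
by case: ifP => _ //; rewrite scaler0 addr0.
Qed.

Lemma core0 (k : int) : aff_core br B h sigma w (Xk k (pik sigma m w k 0)).
Proof. by rewrite (lin0 (pik_lin m w Hsl k)) Xk0; apply: core_zero. Qed.

Lemma gen_core al be e f (k : int) : k != 0 -> hdual h al -> hdual h be ->
  rootsp br h al e -> rootsp br h be f -> eqh h (fun z => al z + be z) (fun _ => 0) ->
  aff_core br B h sigma w (Xk k (pik sigma m w k (br e f))).
Proof.
move=> k0 Hal Hbe He Hf Hab.
have hT : h (br e f).
  by apply/Hh0; apply: (rootsp_eqh Hab); apply: rootsp_br.
have BT y : h y -> B y (br e f) = al y * B e f.
  by move=> hy; rewrite -Binv' He // BZl'.
case: (eqVneq (B e f) 0) => [c0|c0].
  have -> : br e f = 0.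
    apply: (nondeg_h Hlie Hh0 Hdec Hform hT) => y hy.
    by rewrite BT // c0 mulr0.
  exact: core0.
set Q := Pav (br e f).
case: (eqVneq (B Q Q) 0) => [QQ|QQ].
  by rewrite (good Hal Hbe He Hf Hab c0 QQ); apply: core0.
have hQ : h Q by apply: Ph.
have sQ : sigma Q = Q by apply: Pfix.
have BQ y : h y -> sigma y = y -> B y Q = m%:R * (al y * B e f).
  by move=> hy sy; rewrite B_Pav_fix // BT.
have beal z : h z -> be z = - al z.
  by move=> hz; apply/eqP; rewrite -addr_eq0 addrC; apply/eqP; exact: (Hab z hz).
set s := (m%:R * B e f)^-1.
have sm : s * (m%:R * B e f) = 1 by rewrite mulVf // mulf_neq0.
have Ht0e y : h y -> sigma y = y -> B y (s *: Q) = al y.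
  move=> hy sy; rewrite BZr' BQ //.
  transitivity ((s * (m%:R * B e f)) * al y); [by ring | by rewrite sm mul1r].
have Ht0f y : h y -> sigma y = y -> B y (- (s *: Q)) = be y.
  by move=> hy sy; rewrite BNr' Ht0e // beal.
have hsQ : h (s *: Q) by apply: hZ'.
have ssQ : sigma (s *: Q) = s *: Q by rewrite (linZ Hsl) sQ.
have BsQ : B (s *: Q) (s *: Q) != 0.
  by rewrite BZl' BZr' !mulf_neq0 // invr_eq0 mulf_neq0.
have coreE (a : int) : aff_core br B h sigma w (Xk a (pik sigma m w a e)).
  apply: (rootvec_core (lam := al) hsQ ssQ BsQ Ht0e).
    by move=> y hy sy; apply: br_fix_pik.
  exact: (pik_sig Hsl Hm Hw Hp).
have coreF (b : int) : aff_core br B h sigma w (Xk b (pik sigma m w b f)).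
  have s1 : sigma (- (s *: Q)) = - (s *: Q) by rewrite (linN Hsl) ssQ.
  have s2 : B (- (s *: Q)) (- (s *: Q)) != 0 by rewrite BNl' BNr' opprK.
  apply: (rootvec_core (lam := be) (hN' hsQ) s1 s2 Ht0f).
    by move=> y hy sy; apply: br_fix_pik.
  exact: (pik_sig Hsl Hm Hw Hp).
have part j : (j <= m)%N -> aff_core br B h sigma w
    (Xk k (\sum_(a < j) br (pik sigma m w (a : nat)%:Z e) (pik sigma m w (k - (a : nat)%:Z) f))).
  elim: j => [_|j IH jm]; first by rewrite big_ord0 Xk0; apply: core_zero.
  rewrite big_ord_recr /=.
  rewrite -[X in Xk k (_ + X)]scale1r addrC Xk_ZD.
  apply: core_add; last by apply: IH; apply: ltnW.
  apply: core_scale.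
  have E := aff_br_Xk (a := j) (b := k - j%:Z) (pik sigma m w j%:Z e) (pik sigma m w (k - j%:Z) f)
     (ltnW jm).
  rewrite addrC subrK in E; rewrite -(E k0).
  apply: core_br; [exact: coreE | exact: coreF |].
  move=> n Hn /=; case: ifP => // /eqP E2.
  by move: Hn; rewrite E2 /= ltnNge (ltnW jm).
by rewrite -pik_br_sum; apply: part.
Qed.


Inductive Qsp : V -> Prop :=
| Q0 : Qsp 0
| QS a al be e f x : hdual h al -> hdual h be -> rootsp br h al e -> rootsp br h be f ->
    eqh h (fun z => al z + be z) (fun _ => 0) -> Qsp x -> Qsp (a *: br e f + x).

Inductive Gen : V -> Prop :=
| G0 : Gen 0
| Gr a al v x : hdual h al -> ~ eqh h al (fun _ => 0) -> rootsp br h al v -> Gen x ->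
    Gen (a *: v + x)
| Gb a al be e f x : hdual h al -> hdual h be -> rootsp br h al e -> rootsp br h be f ->
    eqh h (fun z => al z + be z) (fun _ => 0) -> Gen x -> Gen (a *: br e f + x).

Lemma core_Qsp (k : int) y : k != 0 -> Qsp y ->
  aff_core br B h sigma w (Xk k (pik sigma m w k y)).
Proof.
move=> k0; elim => [|a al be e f x Hal Hbe He Hf Hab _ IH]; first exact: core0.
rewrite (pik_lin m w Hsl) Xk_ZD; apply: core_add => //; apply: core_scale.
exact: (gen_core k0 Hal Hbe He Hf Hab).
Qed.

Lemma hT_of al be e f : rootsp br h al e -> rootsp br h be f ->
  eqh h (fun z => al z + be z) (fun _ => 0) -> h (br e f).
Proof. by move=> He Hf Hab; apply/Hh0; apply: (rootsp_eqh Hab); apply: rootsp_br. Qed.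

Lemma Qsp_h u : Qsp u -> h u.
Proof.
elim => [|a al be e f x _ _ He Hf Hab _ IH]; first exact: (h0 Hsub).
by apply: (hZD Hsub) => //; apply: (hT_of He Hf Hab).
Qed.

Lemma Gen_ZD a x y : Gen x -> Gen y -> Gen (a *: x + y).
Proof.
move=> Hx; elim: Hx a => [|b al v x' Hal Hne Hv _ IH|b al be e f x' Hal Hbe He Hf Hab _ IH] a Hy.
- by rewrite scaler0 add0r.
- by rewrite scalerDr scalerA -addrA; apply: (Gr _ Hal Hne Hv (IH a Hy)).
- by rewrite scalerDr scalerA -addrA; apply: (Gb _ Hal Hbe He Hf Hab (IH a Hy)).
Qed.

Lemma Gen_br1 ga z y : hdual h ga -> rootsp br h ga z -> Gen y -> Gen (br z y).
Proof.
move=> Hga Hz; elim => [|a al v x Hal Hne Hv _ IH|a al be e f x Hal Hbe He Hf Hab _ IH].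
- by rewrite br0r'; apply: G0.
- rewrite brDr' brZr'.
  case: (pselect (eqh h (fun t => ga t + al t) (fun _ => 0))) => E.
    exact: (Gb _ Hga Hal Hz Hv E IH).
  have Hsum : hdual h (fun t => ga t + al t).
    by move=> a' y1 y2 hy1 hy2; rewrite Hga // Hal //; ring.
  exact: (Gr _ Hsum E (rootsp_br Hz Hv) IH).
- rewrite brDr' brZr'.
  have hT := hT_of He Hf Hab.
  case: (pselect (eqh h ga (fun _ => 0))) => E.
    have hz : h z by apply: (rootsp_h Hh0 E Hz).
    by rewrite (h_comm Hh0 hz hT) scaler0 add0r.
  rewrite (br_anti Hlie) (Hz _ hT) -scaleNr scalerA.
  exact: (Gr _ Hga E Hz IH).
Qed.

Lemma Gen_br z y : Gen y -> Gen (br z y).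
Proof.
move=> Hy; have [n [al [xs [Hax ->]]]] := Hdec z.
rewrite br_suml; apply: sum_In; first exact: G0.
  by move=> a b Ha Hb; rewrite -[a]scale1r; apply: Gen_ZD.
by move=> i _ _; apply: (Gen_br1 (Hax i).1 (Hax i).2).
Qed.

Lemma Gen_dec x : Gen x -> exists u (l : seq ((V -> C) * V)), [/\ Qsp u,
  (forall p, List.In p l -> rootsp br h p.1 p.2 /\ ~ eqh h p.1 (fun _ => 0)) &
  x = u + \sum_(p <- l) p.2].
Proof.
elim => [|a al v x' Hal Hne Hv _ [u [l [Qu Hl ->]]]|a al be e f x' Hal Hbe He Hf Hab _ [u [l [Qu Hl ->]]]].
- by exists 0, [::]; split; [apply: Q0 | by [] | rewrite big_nil addr0].
- exists u, ((al, a *: v) :: l); split => //.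
    move=> p [<-|Hpp]; last exact: Hl.
    by split => //; apply: rootspZ.
  by rewrite big_cons /= addrCA.
- exists (a *: br e f + u), l; split; first exact: (QS _ Hal Hbe He Hf Hab Qu).
    exact: Hl.
  by rewrite addrA.
Qed.

Lemma h_Qsp y : h y -> Qsp y.
Proof.
move=> hy.
have HI : lie_ideal br Gen.
  split; last by move=> x z Hz; apply: Gen_br.
  split; first exact: G0.
  by move=> a x z; apply: Gen_ZD.
case: Hsimp => [[x0 [y0 Hxy]] Hid].
case: (Hid _ HI) => [H0|Hall].
  exfalso.
  have hall x : h x.
    have [n [al [xs [Hax ->]]]] := Hdec x.
    apply: (hsum Hsub) => i _.
    case: (pselect (eqh h (al i) (fun _ => 0))) => E.
      exact: (rootsp_h Hh0 E (Hax i).2).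
    have := H0 _ (Gr 1 (Hax i).1 E (Hax i).2 G0).
    by rewrite addr0 scale1r => ->; apply: (h0 Hsub).
  by move: Hxy; rewrite (h_comm Hh0 (hall x0) (hall y0)) eqxx.
have [u [l [Qu Hl Ey]]] := Gen_dec (Hall y).
have E : u - y = 0.
  apply: (indep Hlie (gam := fun _ => 0) (s := l)) => //.
    apply/Hh0; apply: (hB Hsub) => //; exact: Qsp_h.
    exact: Hl.
  by rewrite Ey opprD addrA subrr add0r addNr.
by move/eqP: E; rewrite subr_eq0 => /eqP <-.
Qed.

Lemma part2 (k : int) : k != 0 -> forall X,
  kdelta_space br B h sigma w k X -> aff_core br B h sigma w X.
Proof.
move=> k0 X HX.
have [y [hy ->]] := (proj1 (part1 B Hlie Hsub Hh0 Hdec Hsl Hsb Hm Hhs Hcent Hp Hw k0 X)) HX.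
exact: (core_Qsp k0 (h_Qsp hy)).
Qed.

End Part2.


Theorem lemma5p2 (R : realType) (V : lmodType R[i])
    (br : V -> V -> V) (B : V -> V -> R[i]) (h : V -> Prop)
    (sigma : V -> V) (m : nat) (w : R[i]) :
  eala br B h ->
  lie_aut br sigma ->
  (forall x, iter m sigma x = x) ->
  (forall x, h x <-> h (sigma x)) ->
  (forall x y, B (sigma x) (sigma y) = B x y) ->
  (forall x, sigma x = x ->
     ((forall y, h y -> sigma y = y -> br y x = 0) <-> h x)) ->
  m.-primitive_root w ->
  (exists al, Rx br B h al /\ nonisotropic B h (pi_dual sigma m al)) ->
  (* m is the order of sigma, and m is prime *)
  (forall j, (0 < j < m)%N -> exists x, iter j sigma x != x) ->
  prime m ->
  (forall k : int, k != 0 -> forall X,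
      kdelta_space br B h sigma w k X <-> pik_h_tk h sigma m w k X) /\
  (finite_dim (fun _ : V => True) -> simple_lie br ->
     forall k : int, k != 0 -> forall X,
       kdelta_space br B h sigma w k X -> aff_core br B h sigma w X).
Proof.
move=> [[Hlie Hform [Hsub _] _] [Hdec Hh0 _ _]] [Hsl _ Hsb] Hm Hhs HBs Hcent Hw _ _ Hp.
split.
  move=> k k0 X.
  exact: (part1 B Hlie Hsub Hh0 Hdec Hsl Hsb Hm Hhs Hcent Hp Hw k0 X).
move=> Hfin Hsimp k k0 X.
exact: (part2 Hlie Hsub Hh0 Hdec Hform Hsl Hsb Hm Hhs HBs Hcent Hp Hw Hfin Hsimp k0).
Qed.
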